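(* The category $\mathsf{HSLat}$ of Heyting semilattices does not satisfy condition (W): there exist a Heyting semilattice $A$ and subobjects $X,Y,Z\le A$ with $[X,Y]=0$ but $[X,Y,Z]\neq 0$. Equivalently, there exist subobjects $X,Y\le A$ with $[X,Y]=0$ but $[X^A,Y^A]\neq 0$.
   Context: A Heyting semilattice is a meet-semilattice with top $1$ and an operation $\Rightarrow$ with $x\wedge y\le z$ iff $x\le y\Rightarrow z$; $\mathsf{HSLat}$ is the category of these with morphisms preserving $1,\wedge,\Rightarrow$; it is a semi-abelian category (pointed, Barr-exact, protomodular, with binary coproducts) with zero object $\{1\}$. For objects $X_1,\dots,X_n$ ($n\ge2$) the cosmash product $X_1\diamond\cdots\diamond X_n$ is the kernel of the morphism $X_1+\cdots+X_n\to\prod_{k=1}^n\coprod_{j\ne k}X_j$ whose component to $\coprod_{j\ne k}X_j$ sends $X_l$ by the coproduct injection if $l\neq k$ and is $0$ on $X_k$. For subobjects $x_i\colon X_i\rightarrowtail A$, the Higgins commutator $[X_1,\dots,X_n]$ is the regular (epi-mono) image of $X_1\diamond\cdots\diamond X_n$ under $\langle x_1,\dots,x_n\rangle\colon X_1+\cdots+X_n\to A$. $X^A$ denotes the normal closure of $X$ in $A$ (smallest normal subobject, i.e. kernel, of $A$ containing $X$). Condition (W) for a semi-abelian category: for all subobjects $X,Y,Z\le A$, $[X,Y]=0$ implies $[X,Y,Z]=0$. *)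

(* Defs.v *)
From mathcomp Require Import all_boot.
From Stdlib Require Import ProofIrrelevance.

Set Implicit Arguments.
Unset Strict Implicit.
Unset Printing Implicit Defensive.

(* x <= y is defined as x /\ y = x.                                    *)
Record HSLat := HSLatPack {
  hcar :> Type;
  htop : hcar;
  hmeet : hcar -> hcar -> hcar;
  himp : hcar -> hcar -> hcar;
  hmeetA : forall x y z, hmeet x (hmeet y z) = hmeet (hmeet x y) z;
  hmeetC : forall x y, hmeet x y = hmeet y x;
  hmeetxx : forall x, hmeet x x = x;
  hmeet1 : forall x, hmeet x htop = x;
  (* x /\ y <= z  iff  x <= y => z *)
  hresid : forall x y z,
      hmeet (hmeet x y) z = hmeet x y <-> hmeet x (himp y z) = x
}.
Arguments htop {h}.
Arguments hmeet {h}.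
Arguments himp {h}.

Definition hle (A : HSLat) (x y : A) : Prop := hmeet x y = x.

Record hom (A B : HSLat) := Hom {
  hom_fun :> A -> B;
  hom_top : hom_fun htop = htop;
  hom_meet : forall x y, hom_fun (hmeet x y) = hmeet (hom_fun x) (hom_fun y);
  hom_imp : forall x y, hom_fun (himp x y) = himp (hom_fun x) (hom_fun y)
}.

(* Subobjects of A (in a variety: sub-Heyting-semilattices). *)
Record subalg (A : HSLat) := SubAlg {
  smem :> A -> Prop;
  smem_top : smem htop;
  smem_meet : forall x y, smem x -> smem y -> smem (hmeet x y);
  smem_imp : forall x y, smem x -> smem y -> smem (himp x y)
}.

Section SubHSLat.
Variables (A : HSLat) (S : subalg A).

Let T := {a : A | S a}.

Lemma sig_ext (u v : T) : proj1_sig u = proj1_sig v -> u = v.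
Proof.
destruct u as [a Ha], v as [b Hb]; simpl; intros ->.
f_equal; apply proof_irrelevance.
Qed.

Definition stop : T := exist _ htop (smem_top S).
Definition smeet (u v : T) : T :=
  exist _ (hmeet (proj1_sig u) (proj1_sig v))
          (smem_meet (proj2_sig u) (proj2_sig v)).
Definition simp (u v : T) : T :=
  exist _ (himp (proj1_sig u) (proj1_sig v))
          (smem_imp (proj2_sig u) (proj2_sig v)).

Lemma smeetA x y z : smeet x (smeet y z) = smeet (smeet x y) z.
Proof. apply sig_ext; simpl; apply hmeetA. Qed.
Lemma smeetC x y : smeet x y = smeet y x.
Proof. apply sig_ext; simpl; apply hmeetC. Qed.
Lemma smeetxx x : smeet x x = x.
Proof. apply sig_ext; simpl; apply hmeetxx. Qed.
Lemma smeet1 x : smeet x stop = x.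
Proof. apply sig_ext; simpl; apply hmeet1. Qed.
Lemma sresid x y z :
  smeet (smeet x y) z = smeet x y <-> smeet x (simp y z) = x.
Proof.
split=> H.
- apply sig_ext; simpl; apply hresid.
  exact (f_equal (@proj1_sig _ _) H).
- apply sig_ext; simpl; apply hresid.
  exact (f_equal (@proj1_sig _ _) H).
Qed.

Definition subHSLat : HSLat :=
  HSLatPack smeetA smeetC smeetxx smeet1 sresid.

End SubHSLat.

(* Terms, used to build coproducts in the variety HSLat.               *)
Inductive term (V : Type) : Type :=
| tvar of V
| ttop
| tmeet of term V & term V
| timp of term V & term V.
Arguments ttop {V}.

Fixpoint teval (A : HSLat) (V : Type) (rho : V -> A) (t : term V) : A :=
  match t with
  | tvar v => rho v
  | ttop => htop
  | tmeet t1 t2 => hmeet (teval rho t1) (teval rho t2)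
  | timp t1 t2 => himp (teval rho t1) (teval rho t2)
  end.

(* Generators of the coproduct X_0 + ... + X_{n-1}: the elements of the X_i. *)
Definition gen (n : nat) (X : 'I_n -> HSLat) : Type := {i : 'I_n & X i}.

(* The coproduct X_0 + ... + X_{n-1} is (terms over gen X) modulo the
   congruence "equal under every cotuple [f_0,...,f_{n-1}] into every B".
   The cosmash product X_0 <> ... <> X_{n-1} is the kernel of the map to
   prod_k coprod_{j<>k} X_j whose k-th component kills X_k (zero map, i.e.
   constant 1) and includes the other X_j.  An element t of the coproduct
   is in this kernel iff for every k its k-th component is 1 in
   coprod_{j<>k} X_j, i.e. iff for every k, every B and every family of
   morphisms f_j : X_j -> B, the value of t with X_k sent to 1 and X_j
   (j <> k) sent through f_j equals 1.                                  *)
Definition in_cosmash (n : nat) (X : 'I_n -> HSLat) (t : term (gen X)) : Prop :=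
  forall (k : 'I_n) (B : HSLat) (f : forall i, hom (X i) B),
    teval (fun p : gen X =>
             if projT1 p == k then htop else f (projT1 p) (projT2 p)) t
    = htop.

(* Higgins commutator [S_0, ..., S_{n-1}] of subobjects S_i of A: the image
   of the cosmash product under the cotuple <s_0,...,s_{n-1}> : coprod S_i -> A
   (the inclusions).  Given as a predicate on A (its image subobject). *)
Definition higgins (A : HSLat) (n : nat) (S : 'I_n -> subalg A) : A -> Prop :=
  fun a => exists t : term (gen (fun i => subHSLat (S i))),
      in_cosmash t /\
      teval (fun p : gen (fun i => subHSLat (S i)) => proj1_sig (projT2 p)) t = a.

Definition is_zero (A : HSLat) (P : A -> Prop) : Prop :=
  forall a, P a -> a = htop.

Definition fam2 (A : HSLat) (X Y : subalg A) : 'I_2 -> subalg A :=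
  fun i => nth X [:: X; Y] i.
Definition fam3 (A : HSLat) (X Y Z : subalg A) : 'I_3 -> subalg A :=
  fun i => nth X [:: X; Y; Z] i.

Definition comm2 (A : HSLat) (X Y : subalg A) : A -> Prop :=
  higgins (fam2 X Y).
Definition comm3 (A : HSLat) (X Y Z : subalg A) : A -> Prop :=
  higgins (fam3 X Y Z).

(* Normal closure X^A: the intersection of all normal subobjects (kernels
   {a | f a = 1} of morphisms f : A -> B) containing X; this intersection
   is itself a kernel (of A -> prod B), hence the smallest normal
   subobject containing X. *)
Definition ncl_mem (A : HSLat) (X : subalg A) (a : A) : Prop :=
  forall (B : HSLat) (f : hom A B), (forall x, X x -> f x = htop) -> f a = htop.

Lemma imp11 (B : HSLat) : himp (@htop B) htop = htop.
Proof.
have H : hmeet (@htop B) (himp htop htop) = htop.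
  by apply hresid; rewrite !hmeetxx.
by rewrite hmeetC hmeet1 in H.
Qed.

Lemma ncl_top (A : HSLat) (X : subalg A) : ncl_mem X htop.
Proof. by move=> B f _; rewrite hom_top. Qed.
Lemma ncl_meet (A : HSLat) (X : subalg A) x y :
  ncl_mem X x -> ncl_mem X y -> ncl_mem X (hmeet x y).
Proof. by move=> Hx Hy B f Hf; rewrite hom_meet (Hx B f Hf) (Hy B f Hf) hmeetxx. Qed.
Lemma ncl_imp (A : HSLat) (X : subalg A) x y :
  ncl_mem X x -> ncl_mem X y -> ncl_mem X (himp x y).
Proof. by move=> Hx Hy B f Hf; rewrite hom_imp (Hx B f Hf) (Hy B f Hf) imp11. Qed.

Definition nclosure (A : HSLat) (X : subalg A) : subalg A :=
  SubAlg (@ncl_top A X) (@ncl_meet A X) (@ncl_imp A X).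

(* Main.v *)
Require Import Defs.
From mathcomp Require Import all_boot.

Set Implicit Arguments.
Unset Strict Implicit.
Unset Printing Implicit Defensive.

Section Gen.
Variable B : HSLat.
Lemma top_meet (x : B) : hmeet htop x = x.
Proof. by rewrite hmeetC hmeet1. Qed.
Lemma imp_top_iff (y z : B) : hmeet y z = y <-> himp y z = htop.
Proof.
by have := hresid htop y z; rewrite !top_meet.
Qed.
Lemma impxx (x : B) : himp x x = htop.
Proof. by apply/imp_top_iff; rewrite hmeetxx. Qed.
Lemma impx1 (x : B) : himp x htop = htop.
Proof. by apply/imp_top_iff; rewrite hmeet1. Qed.
Lemma impK (z y : B) : himp z (himp y z) = htop.
Proof.
apply/imp_top_iff; apply/hresid.
by rewrite -hmeetA [hmeet y z]hmeetC hmeetA hmeetxx.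
Qed.
Lemma imp1x (z : B) : himp htop z = z.
Proof.
set w := himp htop z.
have H1 : hmeet w z = w.
  have := hresid w htop z; rewrite hmeet1 => H.
  by apply/H; rewrite hmeetxx.
have H2 : hmeet z w = z.
  by apply/hresid; rewrite hmeet1 hmeetxx.
by rewrite -H2 hmeetC H1.
Qed.
End Gen.

Lemma teval_hom (A B : HSLat) (h : hom A B) (V : Type) (rho : V -> A) t :
  teval (fun v => h (rho v)) t = h (teval rho t).
Proof.
elim: t => [v||t1 IH1 t2 IH2|t1 IH1 t2 IH2] /=.
- by [].
- by rewrite hom_top.
- by rewrite hom_meet IH1 IH2.
- by rewrite hom_imp IH1 IH2.
Qed.

Lemma teval_ext (A : HSLat) (V : Type) (r1 r2 : V -> A) t :
  (forall v, r1 v = r2 v) -> teval r1 t = teval r2 t.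
Proof.
move=> E; elim: t => [v||t1 IH1 t2 IH2|t1 IH1 t2 IH2] /=; by rewrite ?E ?IH1 ?IH2.
Qed.

(* ---------- the 5-element Heyting algebra 0 < a,b < c < 1 ---------- *)
Inductive A5 := O | Ea | Eb | Ec | I.

Definition m5 (x y : A5) : A5 :=
  match x, y with
  | I, y => y
  | x, I => x
  | Ec, y => y
  | x, Ec => x
  | Ea, Ea => Ea
  | Eb, Eb => Eb
  | _, _ => O
  end.

Definition i5 (x y : A5) : A5 :=
  match x, y with
  | O, _ => I
  | _, I => I
  | I, y => y
  | Ea, Ea => I | Ea, Ec => I | Ea, _ => Eb
  | Eb, Eb => I | Eb, Ec => I | Eb, _ => Ea
  | Ec, Ec => I | Ec, y => y
  end.

Lemma m5A x y z : m5 x (m5 y z) = m5 (m5 x y) z.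
Proof. by case: x; case: y; case: z. Qed.
Lemma m5C x y : m5 x y = m5 y x.
Proof. by case: x; case: y. Qed.
Lemma m5xx x : m5 x x = x.
Proof. by case: x. Qed.
Lemma m51 x : m5 x I = x.
Proof. by case: x. Qed.
Lemma r5 x y z : m5 (m5 x y) z = m5 x y <-> m5 x (i5 y z) = x.
Proof. by case: x; case: y; case: z; split=> //. Qed.

Definition HA5 : HSLat := @HSLatPack A5 I m5 i5 m5A m5C m5xx m51 r5.

Definition m4 (x y : bool * bool) := (x.1 && y.1, x.2 && y.2).
Definition i4 (x y : bool * bool) := (x.1 ==> y.1, x.2 ==> y.2).
Lemma m4A x y z : m4 x (m4 y z) = m4 (m4 x y) z.
Proof. by case: x => [[] []]; case: y => [[] []]; case: z => [[] []]. Qed.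
Lemma m4C x y : m4 x y = m4 y x.
Proof. by case: x => [[] []]; case: y => [[] []]. Qed.
Lemma m4xx x : m4 x x = x.
Proof. by case: x => [[] []]. Qed.
Lemma m41 x : m4 x (true, true) = x.
Proof. by case: x => [[] []]. Qed.
Lemma r4 x y z : m4 (m4 x y) z = m4 x y <-> m4 x (i4 y z) = x.
Proof. by case: x => [[] []]; case: y => [[] []]; case: z => [[] []]; split. Qed.
Definition HB4 : HSLat := @HSLatPack (bool * bool) (true, true) m4 i4 m4A m4C m4xx m41 r4.

Lemma andbA' x y z : x && (y && z) = (x && y) && z. Proof. by case: x; case: y; case: z. Qed.
Lemma r2 x y z : (x && y) && z = x && y <-> x && (y ==> z) = x.
Proof. by case: x; case: y; case: z; split. Qed.
Definition HB2 : HSLat := @HSLatPack bool true andb implb andbA' andbC andbb andbT r2.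

Definition pi1 : hom HB4 HB2.
Proof. by apply: (@Hom HB4 HB2 fst) => //; case=> [[] []] [[] []]. Defined.
Definition pi2 : hom HB4 HB2.
Proof. by apply: (@Hom HB4 HB2 snd) => //; case=> [[] []] [[] []]. Defined.

Definition psi_f (p : bool * bool) : A5 :=
  match p with
  | (true, true) => I | (false, true) => Ea | (true, false) => Eb | (false, false) => O
  end.
Definition psi : hom HB4 HA5.
Proof. by apply: (@Hom HB4 HA5 psi_f) => //; case=> [[] []] [[] []]. Defined.

Definition ha_f (x : A5) : bool := match x with Ea | Ec | I => true | _ => false end.
Definition hb_f (x : A5) : bool := match x with Eb | Ec | I => true | _ => false end.
Definition ha : hom HA5 HB2.
Proof. by apply: (@Hom HA5 HB2 ha_f) => //; case; case. Defined.
Definition hb : hom HA5 HB2.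
Proof. by apply: (@Hom HA5 HB2 hb_f) => //; case; case. Defined.

Definition incl (A : HSLat) (S : subalg A) : hom (subHSLat S) A.
Proof. by apply: (@Hom (subHSLat S) A (@proj1_sig _ _)). Defined.

Definition comph (A B C : HSLat) (g : hom B C) (f : hom A B) : hom A C.
Proof.
apply: (@Hom A C (fun x => g (f x))).
- by rewrite !hom_top.
- by move=> x y; rewrite !hom_meet.
- by move=> x y; rewrite !hom_imp.
Defined.


Definition Xp (v : A5) : Prop := v = Ea \/ v = I.
Definition Yp (v : A5) : Prop := v = Eb \/ v = I.
Definition Zp (v : A5) : Prop := v = Ec \/ v = I.

Definition X5 : subalg HA5.
Proof.
apply: (@SubAlg HA5 Xp); first by right.
- by move=> x y [->|->] [->|->]; rewrite /Xp /=; auto.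
- by move=> x y [->|->] [->|->]; rewrite /Xp /=; auto.
Defined.
Definition Y5 : subalg HA5.
Proof.
apply: (@SubAlg HA5 Yp); first by right.
- by move=> x y [->|->] [->|->]; rewrite /Yp /=; auto.
- by move=> x y [->|->] [->|->]; rewrite /Yp /=; auto.
Defined.
Definition Z5 : subalg HA5.
Proof.
apply: (@SubAlg HA5 Zp); first by right.
- by move=> x y [->|->] [->|->]; rewrite /Zp /=; auto.
- by move=> x y [->|->] [->|->]; rewrite /Zp /=; auto.
Defined.

Lemma comm2_zero : is_zero (comm2 X5 Y5).
Proof.
move=> a [t [Hc <-]].
set G := gen (fun i => subHSLat (fam2 X5 Y5 i)).
pose g (p : G) : bool * bool :=
  if projT1 p == ord0 then (hb_f (proj1_sig (projT2 p)), true)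
  else (true, ha_f (proj1_sig (projT2 p))).
have E : forall p : G, proj1_sig (projT2 p) = psi (g p).
  case=> [[[|[|m]] Hm] [v Hv]] //=.
  - by case: Hv => ->.
  - by case: Hv => ->.
rewrite (teval_ext (r2 := fun p => psi (g p)) t E) teval_hom.
have H1 : teval (fun p => pi1 (g p)) t = true.
  have := Hc (@Ordinal 2 1 isT) HB2 (fun i => comph hb (incl (fam2 X5 Y5 i))).
  move=> HH; rewrite -[true]/(@htop HB2) -HH; apply: teval_ext.
  case=> [[[|[|m]] Hm] [v Hv]] //=.
have H2 : teval (fun p => pi2 (g p)) t = true.
  have := Hc (@Ordinal 2 0 isT) HB2 (fun i => comph ha (incl (fam2 X5 Y5 i))).
  move=> HH; rewrite -[true]/(@htop HB2) -HH; apply: teval_ext.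
  case=> [[[|[|m]] Hm] [v Hv]] //=.
rewrite !teval_hom in H1 H2.
by case: (@teval HB4 _ g t) H1 H2 => [u w] /= -> ->.
Qed.

Definition G3 := gen (fun i : 'I_3 => subHSLat (fam3 X5 Y5 Z5 i)).
Definition gx : G3 := existT _ (@Ordinal 3 0 isT) (exist _ Ea (or_introl erefl)).
Definition gy : G3 := existT _ (@Ordinal 3 1 isT) (exist _ Eb (or_introl erefl)).
Definition gz : G3 := existT _ (@Ordinal 3 2 isT) (exist _ Ec (or_introl erefl)).
Definition t3 : term G3 :=
  timp (timp (tvar gx) (tvar gz)) (timp (timp (tvar gy) (tvar gz)) (tvar gz)).

Lemma t3_cosmash : in_cosmash t3.
Proof.
move=> [[|[|[|m]]] Hm] B f //=.
- by rewrite imp1x impK.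
- by rewrite imp1x impxx impx1.
- by rewrite !impx1.
Qed.

Lemma comm3_nonzero : ~ is_zero (comm3 X5 Y5 Z5).
Proof.
move=> H; have := H Ec; rewrite /comm3 /higgins => H'.
have : Ec = I by apply: H'; exists t3; split; [exact: t3_cosmash | by []].
by [].
Qed.

Lemma cX : ncl_mem X5 Ec.
Proof.
move=> B f Hf.
have Ha : f Ea = htop by apply: Hf; left.
have E : hmeet (f Ea) (f Ec) = f Ea by rewrite -hom_meet.
by rewrite Ha top_meet in E.
Qed.
Lemma cY : ncl_mem Y5 Ec.
Proof.
move=> B f Hf.
have Ha : f Eb = htop by apply: Hf; left.
have E : hmeet (f Eb) (f Ec) = f Eb by rewrite -hom_meet.
by rewrite Ha top_meet in E.
Qed.

Definition G2 := gen (fun i : 'I_2 => subHSLat (fam2 (nclosure X5) (nclosure Y5) i)).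
Definition gu : G2 := existT _ (@Ordinal 2 0 isT) (exist _ Ec cX).
Definition gv : G2 := existT _ (@Ordinal 2 1 isT) (exist _ Ec cY).
Definition t2 : term G2 := timp (timp (tvar gu) (tvar gv)) (tvar gv).

Lemma t2_cosmash : in_cosmash t2.
Proof.
move=> [[|[|m]] Hm] B f //=.
- by rewrite imp1x impxx.
- by rewrite !impx1.
Qed.

Lemma comm2n_nonzero : ~ is_zero (comm2 (nclosure X5) (nclosure Y5)).
Proof.
move=> H; have := H Ec; rewrite /comm2 /higgins => H'.
have : Ec = I by apply: H'; exists t2; split; [exact: t2_cosmash | by []].
by [].
Qed.

Theorem mainTheorem2 :
  (exists (A : HSLat) (X Y Z : subalg A),
      is_zero (comm2 X Y) /\ ~ is_zero (comm3 X Y Z)) /\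
  (exists (A : HSLat) (X Y : subalg A),
      is_zero (comm2 X Y) /\ ~ is_zero (comm2 (nclosure X) (nclosure Y))).
Proof.
split.
- exists HA5, X5, Y5, Z5; split; [exact: comm2_zero | exact: comm3_nonzero].
- exists HA5, X5, Y5; split; [exact: comm2_zero | exact: comm2n_nonzero].
Qed.
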